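(* If $\Sigma$ is a finite inductive signature, then $\mathcal{J}(\Sigma)=\mathcal{J}^*(\Sigma)$.
   Context: Fix an infinite set $V$ of variables with decidable equality, and a fresh variable provider: functions $\varphi,\mathsf{fr}$ assigning to each finite $X\subseteq V$ an inhabited subset $\varphi(X)\subseteq V\setminus X$ and an element $\mathsf{fr}(X)\in\varphi(X)$. Fix disjoint sets $F$ (function symbols) and $T$ (type symbols) with decidable equality. Preelements are terms built from variables and symbols of $F$; a pretype is $S(t_1,\ldots,t_n)$ with $S\in T$ and $t_i$ preelements. $\mathrm{V}(E)$ is the set of variables of an expression $E$, $\equiv$ is syntactic identity, and $E[\bar a/\bar x]$ is simultaneous substitution. A precontext is a sequence $\Gamma=x_1:A_1,\ldots,x_n:A_n$ of pretypes with $x_k\in\varphi(\{x_1,\ldots,x_{k-1}\})$ and $\mathrm{V}(A_k)\subseteq\{x_1,\ldots,x_{k-1}\}$; $\mathrm{OV}(\Gamma)=x_1,\ldots,x_n$, $\mathrm{V}(\Gamma)=\{x_1,\ldots,x_n\}$, $\mathrm{Fresh}(\Gamma)=\varphi(\mathrm{V}(\Gamma))$, $\mathrm{fresh}(\Gamma)=\mathsf{fr}(\mathrm{V}(\Gamma))$, $E[\bar a/\Gamma]=E[\bar a/x_1,\ldots,x_n]$. Top variables: $\mathrm{TV}(\langle\rangle)=\emptyset$, $\mathrm{TV}(\Gamma,x:A)=(\mathrm{TV}(\Gamma)\setminus\mathrm{V}(A))\cup\{x\}$. A determining sequence for $\Gamma$ is a strictly increasing $\bar i=i_1,\ldots,i_k$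 in $\{1,\ldots,n\}$ with $\mathrm{TV}(\Gamma)\subseteq\{x_{i_1},\ldots,x_{i_k}\}$; for $\bar a=a_1,\ldots,a_n$ put $\bar a_{\bar i}=a_{i_1},\ldots,a_{i_k}$. A type predeclaration is $(\Gamma,S,\bar i)$ with $S\in T$, $\bar i$ determining; a function predeclaration is $(\Gamma,f,\bar i,U)$ with $f\in F$, $\bar i$ determining, $U$ a pretype with $\mathrm{V}(U)\subseteq\mathrm{V}(\Gamma)$. A presignature is a set $\Sigma$ of predeclarations with no symbol declared twice. Judgements are ''$\Gamma$ context'', ''$A$ type $(\Gamma)$'', ''$a:A\ (\Gamma)$''. $\mathcal{J}(\Sigma)$ is the smallest set of judgements closed under: (R1) $\langle\rangle$ context; (R2) from $\Gamma$ context and $A$ type $(\Gamma)$ infer $\Gamma,x:A$ context, for $x\in\mathrm{Fresh}(\Gamma)$; (R3) from $x_1:A_1,\ldots,x_n:A_n$ context infer $x_i:A_i\ (x_1:A_1,\ldots,x_n:A_n)$; (R4) if $(\Gamma,S,\bar i)\in\Sigma$ and $\bar a:\Delta\to\Gamma$, infer $S(\bar a_{\bar i})$ type $(\Delta)$; (R5) if $(\Gamma,f,\bar i,U)\in\Sigma$, $\bar a:\Delta\to\Gamma$ and $U[\bar a/\Gamma]$ type $(\Delta)$, infer $f(\bar a_{\bar i}):U[\bar a/\Gamma]\ (\Delta)$. Here, for $\Gamma=x_1:A_1,\ldots,x_n:A_n$, the context map ''$\bar a:\Delta\to\Gamma$'' abbreviates the $n+2$ judgements $\Delta$ context, $\Gamma$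 context, and $a_k:A_k[a_1,\ldots,a_{k-1}/x_1,\ldots,x_{k-1}]\ (\Delta)$ for $k=1,\ldots,n$. $\Sigma$ is a signature if ($\Gamma$ context)$\in\mathcal{J}(\Sigma)$ whenever $(\Gamma,S,\bar i)\in\Sigma$, and ($U$ type $(\Gamma)$)$\in\mathcal{J}(\Sigma)$ whenever $(\Gamma,f,\bar i,U)\in\Sigma$. $\mathcal{J}^*(\Sigma)$ is defined exactly like $\mathcal{J}(\Sigma)$ except that (R5) is replaced by (R5* ): if $(\Gamma,f,\bar i,U)\in\Sigma$ and $\bar a:\Delta\to\Gamma$ (with the context-map judgements now read in $\mathcal{J}^*(\Sigma)$), infer $f(\bar a_{\bar i}):U[\bar a/\Gamma]\ (\Delta)$ (no premiss that $U[\bar a/\Gamma]$ is a type). A signature is inductive if it is obtained from the empty signature by finitely many steps, each adding either a type predeclaration $(\Gamma,S,\bar i)$ with $S$ not yet declared and ($\Gamma$ context)$\in\mathcal{J}$ of the current signature, or a function predeclaration $(\Gamma,f,\bar i,U)$ with $f$ not yet declared and ($U$ type $(\Gamma)$)$\in\mathcal{J}$ of the current signature. *)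

(* Defs.v *)
From Stdlib Require Import List Arith Sorting.Sorted.
Import ListNotations.
Set Implicit Arguments.

(* Preelements: variables and function symbols applied to lists of preelements
   (no fixed arity at the level of presyntax). *)
Inductive preelem (V F : Type) : Type :=
| Var (x : V)
| App (f : F) (ts : list (preelem V F)).
Arguments Var {V F} x.
Arguments App {V F} f ts.

Inductive pretype (V F T : Type) : Type :=
| PT (S : T) (ts : list (preelem V F)).
Arguments PT {V F T} S ts.

(* A (pre)context x1:A1,...,xn:An, listed in order (x1 first). *)
Definition ctx (V F T : Type) := list (V * pretype V F T).

Inductive judgement (V F T : Type) : Type :=
| JCtx (G : ctx V F T)
| JType (G : ctx V F T) (A : pretype V F T)
| JElem (G : ctx V F T) (a : preelem V F) (A : pretype V F T).
Arguments JCtx {V F T} G.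
Arguments JType {V F T} G A.
Arguments JElem {V F T} G a A.

(* Predeclarations; index sequences are 0-based (i < n instead of 1 <= i <= n). *)
Inductive decl (V F T : Type) : Type :=
| TDecl (G : ctx V F T) (S : T) (ii : list nat)
| FDecl (G : ctx V F T) (f : F) (ii : list nat) (U : pretype V F T).
Arguments TDecl {V F T} G S ii.
Arguments FDecl {V F T} G f ii U.

Definition decl_sym {V F T} (d : decl V F T) : T + F :=
  match d with TDecl _ S0 _ => inl S0 | FDecl _ f _ _ => inr f end.

Fixpoint vars_el {V F} (t : preelem V F) : list V :=
  match t with
  | Var x => [x]
  | App _ ts => (fix go (ts : list (preelem V F)) : list V :=
                   match ts with [] => [] | t :: ts' => vars_el t ++ go ts' end) ts
  end.

Definition vars_ty {V F T} (A : pretype V F T) : list V :=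
  match A with PT _ ts => flat_map vars_el ts end.

Definition OV {V F T} (G : ctx V F T) : list V := map fst G.
Definition Vset {V F T} (G : ctx V F T) : V -> Prop := fun v => In v (OV G).

Fixpoint lookup {V F} (eqV : forall x y : V, {x = y} + {x <> y})
  (s : list (V * preelem V F)) (x : V) : option (preelem V F) :=
  match s with
  | [] => None
  | (y, a) :: s' => if eqV x y then Some a else lookup eqV s' x
  end.

Fixpoint subst_el {V F} (eqV : forall x y : V, {x = y} + {x <> y})
  (s : list (V * preelem V F)) (t : preelem V F) : preelem V F :=
  match t with
  | Var x => match lookup eqV s x with Some a => a | None => Var x end
  | App f ts => App f ((fix go (ts : list (preelem V F)) : list (preelem V F) :=
                          match ts with [] => [] | t :: ts' => subst_el eqV s t :: go ts' end) ts)
  end.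

Definition subst_ty {V F T} (eqV : forall x y : V, {x = y} + {x <> y})
  (s : list (V * preelem V F)) (A : pretype V F T) : pretype V F T :=
  match A with PT S0 ts => PT S0 (map (subst_el eqV s) ts) end.

Definition select {X : Type} (a : list X) (ii : list nat) : list X :=
  flat_map (fun i => match nth_error a i with Some t => [t] | None => [] end) ii.

Definition finite_set {V : Type} (X : V -> Prop) : Prop :=
  exists l : list V, forall v, X v <-> In v l.

Definition fresh_provider {V : Type} (phi : (V -> Prop) -> (V -> Prop))
  (fr : (V -> Prop) -> V) : Prop :=
  forall X, finite_set X ->
    phi X (fr X) /\ (forall v, phi X v -> ~ X v).

Definition is_precontext {V F T} (phi : (V -> Prop) -> (V -> Prop)) (G : ctx V F T) : Prop :=
  forall k x A, nth_error G k = Some (x, A) ->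
    phi (fun v => In v (firstn k (OV G))) x /\
    incl (vars_ty A) (firstn k (OV G)).

Definition TV {V F T} (G : ctx V F T) : V -> Prop :=
  fold_left (fun (S0 : V -> Prop) (xA : V * pretype V F T) =>
               fun v => (S0 v /\ ~ In v (vars_ty (snd xA))) \/ v = fst xA)
            G (fun _ => False).

Definition determining {V F T} (G : ctx V F T) (ii : list nat) : Prop :=
  StronglySorted lt ii /\ Forall (fun i => i < length G) ii /\
  (forall v, TV G v -> exists i, In i ii /\ nth_error (OV G) i = Some v).

Definition is_predecl {V F T} (phi : (V -> Prop) -> (V -> Prop)) (d : decl V F T) : Prop :=
  match d with
  | TDecl G _ ii => is_precontext phi G /\ determining G ii
  | FDecl G _ ii U => is_precontext phi G /\ determining G ii /\ incl (vars_ty U) (OV G)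
  end.

(* abar : D -> G, read in the judgement set P *)
Definition ctxmap {V F T} (eqV : forall x y : V, {x = y} + {x <> y})
  (P : judgement V F T -> Prop) (a : list (preelem V F)) (D G : ctx V F T) : Prop :=
  P (JCtx D) /\ P (JCtx G) /\ length a = length G /\
  forall k x A ak, nth_error G k = Some (x, A) -> nth_error a k = Some ak ->
    P (JElem D ak (subst_ty eqV (combine (firstn k (OV G)) (firstn k a)) A)).

(* closure under R1-R4 and either R5 (star = false) or R5* (star = true) *)
Definition closed_under {V F T} (eqV : forall x y : V, {x = y} + {x <> y})
  (phi : (V -> Prop) -> (V -> Prop)) (Sigma : decl V F T -> Prop) (star : bool)
  (P : judgement V F T -> Prop) : Prop :=
  P (JCtx []) /\
  (forall G A x, P (JCtx G) -> P (JType G A) -> phi (Vset G) x ->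
             P (JCtx (G ++ [(x, A)]))) /\
  (forall G k x A, P (JCtx G) -> nth_error G k = Some (x, A) ->
             P (JElem G (Var x) A)) /\
  (forall G S0 ii D a, Sigma (TDecl G S0 ii) -> ctxmap eqV P a D G ->
             P (JType D (PT S0 (select a ii)))) /\
           (forall G f ii U D a, Sigma (FDecl G f ii U) -> ctxmap eqV P a D G ->
             (if star then True else P (JType D (subst_ty eqV (combine (OV G) a) U))) ->
             P (JElem D (App f (select a ii)) (subst_ty eqV (combine (OV G) a) U))).

Definition J {V F T} (eqV : forall x y : V, {x = y} + {x <> y})
  (phi : (V -> Prop) -> (V -> Prop)) (Sigma : decl V F T -> Prop) (j : judgement V F T) : Prop :=
  forall P, closed_under eqV phi Sigma false P -> P j.

Definition Jstar {V F T} (eqV : forall x y : V, {x = y} + {x <> y})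
  (phi : (V -> Prop) -> (V -> Prop)) (Sigma : decl V F T -> Prop) (j : judgement V F T) : Prop :=
  forall P, closed_under eqV phi Sigma true P -> P j.

Definition step_ok {V F T} (eqV : forall x y : V, {x = y} + {x <> y})
  (phi : (V -> Prop) -> (V -> Prop)) (l : list (decl V F T)) (d : decl V F T) : Prop :=
  match d with
  | TDecl G _ _ => J eqV phi (fun e => In e l) (JCtx G)
  | FDecl G _ _ U => J eqV phi (fun e => In e l) (JType G U)
  end.

Inductive built {V F T} (eqV : forall x y : V, {x = y} + {x <> y})
  (phi : (V -> Prop) -> (V -> Prop)) : list (decl V F T) -> Prop :=
| built_nil : built eqV phi []
| built_snoc (l : list (decl V F T)) (d : decl V F T) :
    built eqV phi l ->
    is_predecl phi d ->
    (forall d', In d' l -> decl_sym d' <> decl_sym d) ->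
    step_ok eqV phi l d ->
    built eqV phi (l ++ [d]).

Definition inductive_signature {V F T} (eqV : forall x y : V, {x = y} + {x <> y})
  (phi : (V -> Prop) -> (V -> Prop)) (Sigma : decl V F T -> Prop) : Prop :=
  exists l, built eqV phi l /\ forall d, Sigma d <-> In d l.

Definition finite_sig {V F T} (Sigma : decl V F T -> Prop) : Prop :=
  exists l : list (decl V F T), forall d, Sigma d <-> In d l.

(* Main.v *)
Require Import Defs.
From Stdlib Require Import List Arith Lia.
Import ListNotations.

Section Syn.
Context {V F T : Type} (eqV : forall x y : V, {x = y} + {x <> y}).
Implicit Types (s tau : list (V * preelem V F)) (t : preelem V F) (g : preelem V F -> preelem V F).

Fixpoint pe_ind (P : preelem V F -> Prop) (HV : forall x, P (Var x))
  (HA : forall f ts, Forall P ts -> P (App f ts)) (t : preelem V F) : P t :=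
  match t with
  | Var x => HV x
  | App f ts => HA f ts ((fix go (ts : list (preelem V F)) : Forall P ts :=
      match ts with [] => Forall_nil _ | t :: ts' => Forall_cons _ (pe_ind P HV HA t) (go ts') end) ts)
  end.

Lemma subst_App s f (ts : list (preelem V F)) : subst_el eqV s (App f ts) = App f (map (subst_el eqV s) ts).
Proof.
  induction ts as [|t ts IH]; simpl; [reflexivity|].
  simpl in IH. apply (f_equal (fun p => match p with App _ l => l | _ => [] end)) in IH. simpl in IH. rewrite IH. reflexivity.
Qed.

Lemma vars_App (f : F) (ts : list (preelem V F)) : vars_el (App f ts) = flat_map vars_el ts.
Proof.
  induction ts as [|t ts IH]; simpl; [reflexivity|].
  simpl in IH. rewrite IH. reflexivity.
Qed.

Definition mapsnd (g : preelem V F -> preelem V F) (s : list (V * preelem V F)) :=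
  map (fun p => (fst p, g (snd p))) s.

Lemma lookup_mapsnd g s x : lookup eqV (mapsnd g s) x = option_map g (lookup eqV s x).
Proof.
  induction s as [|[y a] s IH]; simpl; auto. destruct (eqV x y); auto.
Qed.

Lemma subst_comp_el s tau t :
  (forall x, In x (vars_el t) -> lookup eqV s x <> None) ->
  subst_el eqV tau (subst_el eqV s t) = subst_el eqV (mapsnd (subst_el eqV tau) s) t.
Proof.
  induction t as [x|f ts IH] using pe_ind; intros H.
  - simpl. rewrite lookup_mapsnd. specialize (H x (or_introl eq_refl)).
    destruct (lookup eqV s x); [reflexivity|congruence].
  - rewrite !subst_App, map_map. f_equal. apply map_ext_in.
    intros t Ht. rewrite Forall_forall in IH. apply IH; auto.
    intros x Hx. apply H. rewrite vars_App. apply in_flat_map. eauto.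
Qed.

Lemma subst_comp_ty s tau (A : pretype V F T) :
  (forall x, In x (vars_ty A) -> lookup eqV s x <> None) ->
  subst_ty eqV tau (subst_ty eqV s A) = subst_ty eqV (mapsnd (subst_el eqV tau) s) A.
Proof.
  destruct A as [S0 ts]; simpl; intros H. f_equal. rewrite map_map. apply map_ext_in.
  intros t Ht. apply subst_comp_el. intros x Hx. apply H. apply in_flat_map; eauto.
Qed.

Lemma subst_ext_el s (s' : list (V * preelem V F)) t :
  (forall x, In x (vars_el t) -> lookup eqV s x = lookup eqV s' x) ->
  subst_el eqV s t = subst_el eqV s' t.
Proof.
  induction t as [x|f ts IH] using pe_ind; intros H.
  - simpl. rewrite (H x (or_introl eq_refl)). reflexivity.
  - rewrite !subst_App. f_equal. apply map_ext_in.
    intros t Ht. rewrite Forall_forall in IH. apply IH; auto.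
    intros x Hx. apply H. rewrite vars_App. apply in_flat_map. eauto.
Qed.

Lemma subst_ext_ty s (s' : list (V * preelem V F)) (A : pretype V F T) :
  (forall x, In x (vars_ty A) -> lookup eqV s x = lookup eqV s' x) ->
  subst_ty eqV s A = subst_ty eqV s' A.
Proof.
  destruct A as [S0 ts]; simpl; intros H. f_equal. apply map_ext_in.
  intros t Ht. apply subst_ext_el. intros x Hx. apply H. apply in_flat_map; eauto.
Qed.

Lemma combine_map (xs : list V) (a : list (preelem V F)) g :
  combine xs (map g a) = mapsnd g (combine xs a).
Proof.
  revert a; induction xs as [|x xs IH]; intros [|b a]; simpl; auto. f_equal; auto.
Qed.

Lemma lookup_firstn k (xs : list V) (a : list (preelem V F)) x :
  In x (firstn k xs) ->
  lookup eqV (combine xs a) x = lookup eqV (combine (firstn k xs) (firstn k a)) x.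
Proof.
  revert xs a; induction k as [|k IH]; intros xs a H; [simpl in H; contradiction|].
  destruct xs as [|y xs]; [simpl in H; contradiction|].
  destruct a as [|b a]; simpl; auto.
  destruct (eqV x y); auto. apply IH. simpl in H. destruct H; congruence.
Qed.

Lemma lookup_some (xs : list V) (a : list (preelem V F)) x :
  In x xs -> length xs <= length a -> lookup eqV (combine xs a) x <> None.
Proof.
  revert a; induction xs as [|y xs IH]; intros a H Hl; [contradiction|].
  destruct a as [|b a]; simpl in *; [lia|].
  destruct (eqV x y); [congruence|]. apply IH; [destruct H; congruence|lia].
Qed.

Lemma lookup_nth (xs : list V) (a : list (preelem V F)) k x ak :
  nth_error xs k = Some x -> nth_error a k = Some ak -> ~ In x (firstn k xs) ->
  lookup eqV (combine xs a) x = Some ak.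
Proof.
  revert a k; induction xs as [|y xs IH]; intros a k H1 H2 H3.
  - destruct k; discriminate.
  - destruct a as [|b a]; [destruct k; discriminate|].
    destruct k as [|k]; simpl in *.
    + injection H1; injection H2; intros; subst. destruct (eqV x x); congruence.
    + destruct (eqV x y); [subst; tauto|]. apply (IH a k); auto.
Qed.

Lemma select_map {X Y} (g : X -> Y) a ii : select (map g a) ii = map g (select a ii).
Proof.
  induction ii as [|i ii IH]; simpl; auto. rewrite nth_error_map, IH.
  destruct (nth_error a i); simpl; auto.
Qed.

Lemma select_in {X} (a : list X) ii (t : X) : In t (select a ii) -> In t a.
Proof.
  unfold select. intros H. apply in_flat_map in H as [i [_ Hi]].
  destruct (nth_error a i) eqn:E; [|contradiction]. destruct Hi as [<-|[]].
  eapply nth_error_In; eauto.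
Qed.

End Syn.


Section Main.
Context {V F T : Type} (eqV : forall x y : V, {x = y} + {x <> y})
  (phi : (V -> Prop) -> (V -> Prop)).

Lemma ctxmap_mono (P Q : judgement V F T -> Prop) a D G :
  (forall j, P j -> Q j) -> ctxmap eqV P a D G -> ctxmap eqV Q a D G.
Proof.
  intros H (H1 & H2 & H3 & H4). repeat split; auto. intros; apply H; eauto.
Qed.

Lemma J_closed (Sg : decl V F T -> Prop) : closed_under eqV phi Sg false (J eqV phi Sg).
Proof.
  split; [|split; [|split; [|split]]].
  - intros P HP. apply (proj1 HP).
  - intros G A x H1 H2 H3 P HP. pose proof HP as (_&K&_). apply K; [apply H1, HP|apply H2, HP|exact H3].
  - intros G k x A H1 H2 P HP. pose proof HP as (_&_&K&_). eapply K; [apply H1, HP|exact H2].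
  - intros G S0 ii D a H1 H2 P HP. pose proof HP as (_&_&_&K&_). eapply K; [exact H1|].
    eapply ctxmap_mono; [|exact H2]. intros j Hj; apply Hj, HP.
  - intros G f ii U D a H1 H2 H3 P HP. pose proof HP as (_&_&_&_&K). eapply K; [exact H1| |].
    + eapply ctxmap_mono; [|exact H2]. intros j Hj; apply Hj, HP.
    + simpl in *. apply H3, HP.
Qed.

Lemma J_mono (S1 S2 : decl V F T -> Prop) j :
  (forall d, S1 d -> S2 d) -> J eqV phi S1 j -> J eqV phi S2 j.
Proof.
  intros HS Hj P (H1 & H2 & H3 & H4 & H5). apply Hj. split; [exact H1|split; [exact H2|split; [exact H3|split]]].
  - intros G S0 ii D a K1 K2; eapply H4; [apply HS, K1|exact K2].
  - intros G f ii U D a K1 K2 K3; eapply H5; [apply HS, K1|exact K2|exact K3].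
Qed.

Definition inv (j : judgement V F T) : Prop :=
  match j with
  | JCtx G => is_precontext phi G
  | JType G A => incl (vars_ty A) (OV G)
  | JElem G t A => incl (vars_el t) (OV G) /\ incl (vars_ty A) (OV G)
  end.

Definition sub (Sg : decl V F T -> Prop) (j : judgement V F T) : Prop :=
  match j with
  | JCtx G => True
  | JType G A => forall a D, ctxmap eqV (J eqV phi Sg) a D G ->
      J eqV phi Sg (JType D (subst_ty eqV (combine (OV G) a) A))
  | JElem G t A => forall a D, ctxmap eqV (J eqV phi Sg) a D G ->
      J eqV phi Sg (JElem D (subst_el eqV (combine (OV G) a) t) (subst_ty eqV (combine (OV G) a) A))
  end.

Lemma in_nth_ctx {X Y} (G : list Y) (a : list X) t :
  length a = length G -> In t a -> exists k y, nth_error a k = Some t /\ nth_error G k = Some y.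
Proof.
  intros Hl Ht. apply In_nth_error in Ht as [k Hk].
  destruct (nth_error G k) eqn:E; eauto.
  apply nth_error_None in E. assert (k < length a) by (apply nth_error_Some; congruence). lia.
Qed.

Lemma OV_length (G : ctx V F T) : length (OV G) = length G.
Proof. unfold OV; apply length_map. Qed.

Lemma in_firstn {X} k (l : list X) x : In x (firstn k l) -> In x l.
Proof. intros H. rewrite <- (firstn_skipn k l). apply in_or_app; auto. Qed.

Lemma ctxmap_subst (Sg : decl V F T -> Prop) (P : judgement V F T -> Prop) a D G a' D' :
  (forall j, P j -> J eqV phi Sg j /\ inv j /\ sub Sg j) ->
  ctxmap eqV P a D G -> ctxmap eqV (J eqV phi Sg) a' D' D ->
  ctxmap eqV (J eqV phi Sg) (map (subst_el eqV (combine (OV D) a')) a) D' G.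
Proof.
  intros HP [HD [HG [Hl Hel]]] Hcm'.
  pose proof Hcm' as [HD' _].
  split; [exact HD'|split; [apply HP, HG|split; [rewrite length_map; exact Hl|]]].
  intros k x A bk HGk Hbk. rewrite nth_error_map in Hbk.
  destruct (nth_error a k) as [ak|] eqn:Hak; [|discriminate]. simpl in Hbk. injection Hbk as <-.
  destruct (HP _ (Hel k x A ak HGk Hak)) as [_ [_ Hsub]].
  specialize (Hsub a' D' Hcm'). simpl in Hsub.
  destruct (HP _ HG) as [_ [Hpre _]]. destruct (Hpre k x A HGk) as [_ HA].
  assert (Hk : k < length G) by (apply nth_error_Some; congruence).
  rewrite subst_comp_ty in Hsub.
  - rewrite firstn_map, combine_map. exact Hsub.
  - intros y Hy. apply lookup_some; [apply HA, Hy|].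
    rewrite !length_firstn, OV_length. lia.
Qed.

Lemma main_ind (Sg : decl V F T -> Prop) fr
  (Hfresh : fresh_provider phi fr)
  (HU : forall G f ii U, Sg (FDecl G f ii U) -> incl (vars_ty U) (OV G)) :
  forall j, J eqV phi Sg j -> J eqV phi Sg j /\ inv j /\ sub Sg j.
Proof.
  pose proof (J_closed Sg) as (C1 & C2 & C3 & C4 & C5).
  intros j Hj. apply Hj. clear j Hj.
  split; [|split; [|split; [|split]]].
  - split; [apply C1|split; [|exact I]].
    intros k x A H. destruct k; discriminate.
  - intros G A x [J1 [I1 _]] [J2 [I2 _]] Hx.
    split; [apply C2; auto|split; [|exact I]].
    intros k y B Hk.
    unfold OV in *. rewrite map_app. simpl.
    destruct (Nat.lt_ge_cases k (length G)) as [Hlt|Hge].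
    + rewrite nth_error_app1 in Hk by auto.
      rewrite firstn_app. replace (k - length (map fst G)) with 0 by (rewrite length_map; lia).
      simpl. rewrite app_nil_r. apply (I1 k y B Hk).
    + rewrite nth_error_app2 in Hk by auto.
      destruct (k - length G) as [|m] eqn:E; [|destruct m; discriminate].
      simpl in Hk. injection Hk as <- <-.
      replace k with (length (map fst G)) by (rewrite length_map; lia).
      rewrite firstn_app, Nat.sub_diag, firstn_all. simpl. rewrite app_nil_r.
      split; [exact Hx| exact I2].
  - intros G k x A [J1 [I1 _]] Hk.
    split; [eapply C3; eauto|split].
    + destruct (I1 k x A Hk) as [_ HA]. split.
      * simpl. intros v [<-|[]].
        apply nth_error_In with k. unfold OV. rewrite nth_error_map, Hk. reflexivity.
      * intros v Hv. apply HA in Hv. eapply in_firstn; eauto.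
    + simpl. intros a D [HD [HG [Hl Hel]]].
      destruct (I1 k x A Hk) as [Hphi HA].
      assert (Hk' : k < length G) by (apply nth_error_Some; congruence).
      destruct (nth_error a k) as [ak|] eqn:Hak.
      2:{ apply nth_error_None in Hak. lia. }
      specialize (Hel k x A ak Hk Hak).
      assert (Hnot : ~ In x (firstn k (OV G))).
      { refine (proj2 (Hfresh (fun v => In v (firstn k (OV G))) _) x Hphi).
        exists (firstn k (OV G)). intros v; tauto. }
      rewrite (lookup_nth eqV (OV G) a k x ak); auto.
      2:{ unfold OV. rewrite nth_error_map, Hk. reflexivity. }
      rewrite (subst_ext_ty eqV _ (combine (firstn k (OV G)) (firstn k a))); [exact Hel|].
      intros y Hy. apply lookup_firstn, HA, Hy.
  - intros G S0 ii D a HS Hcm.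
    split; [apply (C4 G S0 ii D a HS); eapply ctxmap_mono; [|exact Hcm]; intros j Hj; apply Hj|split].
    + simpl. intros v Hv. apply in_flat_map in Hv as [t [Ht Hv]].
      apply select_in in Ht. destruct Hcm as [_ [_ [Hl Hel]]].
      destruct (in_nth_ctx G a t Hl Ht) as [k [[y B] [Hk1 Hk2]]].
      destruct (Hel k y B t Hk2 Hk1) as [_ [[Hvt _] _]]. apply Hvt, Hv.
    + simpl. intros a' D' Hcm'. rewrite <- select_map.
      apply (C4 G S0 ii D' _ HS). eapply ctxmap_subst; [|exact Hcm|exact Hcm'].
      intros j Hj; exact Hj.
  - intros G f ii U D a HS Hcm [HTJ [HTI HTS]].
    split; [apply (C5 G f ii U D a HS); [eapply ctxmap_mono; [|exact Hcm]; intros j Hj; apply Hj|exact HTJ]|split].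
    + split; [|exact HTI].
      rewrite vars_App. intros v Hv. apply in_flat_map in Hv as [t [Ht Hv]].
      apply select_in in Ht. destruct Hcm as [_ [_ [Hl Hel]]].
      destruct (in_nth_ctx G a t Hl Ht) as [k [[y B] [Hk1 Hk2]]].
      destruct (Hel k y B t Hk2 Hk1) as [_ [[Hvt _] _]]. apply Hvt, Hv.
    + unfold sub. intros a' D' Hcm'. rewrite subst_App, <- select_map.
      assert (E : subst_ty eqV (combine (OV D) a') (subst_ty eqV (combine (OV G) a) U)
                = subst_ty eqV (combine (OV G) (map (subst_el eqV (combine (OV D) a')) a)) U).
      { rewrite subst_comp_ty, combine_map; [reflexivity|].
        intros y Hy. apply lookup_some; [apply (HU G f ii U HS), Hy|].
        destruct Hcm as [_ [_ [Hl _]]]. rewrite OV_length, Hl. lia. }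
      rewrite E. apply (C5 G f ii U D' _ HS).
      * eapply ctxmap_subst; [|exact Hcm|exact Hcm']. intros j Hj; exact Hj.
      * simpl. rewrite <- E. apply HTS, Hcm'.
Qed.

Lemma built_props (l : list (decl V F T)) : built eqV phi l -> forall d, In d l ->
  is_predecl phi d /\ match d with FDecl G _ _ U => J eqV phi (fun e => In e l) (JType G U) | _ => True end.
Proof.
  induction 1 as [|l d Hb IH Hpre Hsym Hok]; intros d' Hd'; [contradiction|].
  assert (Hm : forall j, J eqV phi (fun e => In e l) j -> J eqV phi (fun e => In e (l ++ [d])) j).
  { intros j. apply J_mono. intros e He; apply in_or_app; auto. }
  apply in_app_or in Hd' as [Hd'|[<-|[]]].
  - destruct (IH d' Hd') as [H1 H2]. split; auto. destruct d'; auto.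
  - split; auto. destruct d; simpl in Hok; auto.
Qed.
End Main.

Theorem mainTheorem7
  (V F T : Type)
  (eqV : forall x y : V, {x = y} + {x <> y})
  (eqF : forall x y : F, {x = y} + {x <> y})
  (eqT : forall x y : T, {x = y} + {x <> y})
  (V_infinite : forall l : list V, exists v, ~ In v l)
  (phi : (V -> Prop) -> (V -> Prop)) (fr : (V -> Prop) -> V)
  (Hfresh : fresh_provider phi fr)
  (Sigma : decl V F T -> Prop)
  (Hfin : finite_sig Sigma)
  (Hind : inductive_signature eqV phi Sigma) :
  forall j : judgement V F T, J eqV phi Sigma j <-> Jstar eqV phi Sigma j.
Proof.
  destruct Hind as [l [Hb Hl]].
  pose proof (built_props eqV phi l Hb) as BP.
  assert (HU : forall G f ii U, Sigma (FDecl G f ii U) -> incl (vars_ty U) (OV G)).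
  { intros G f ii U HS. apply Hl in HS. apply (BP _ HS). }
  assert (HT : forall G f ii U, Sigma (FDecl G f ii U) -> J eqV phi Sigma (JType G U)).
  { intros G f ii U HS. apply Hl in HS. destruct (BP _ HS) as [_ H].
    eapply J_mono; [|exact H]. intros e He; apply Hl, He. }
  intros j; split.
  - intros Hj P (H1 & H2 & H3 & H4 & H5). apply Hj.
    split; [exact H1|split; [exact H2|split; [exact H3|split; [exact H4|]]]].
    intros G f ii U D a K1 K2 _. apply (H5 G f ii U D a K1 K2 I).
  - intros Hj. apply Hj.
    pose proof (J_closed eqV phi Sigma) as (C1 & C2 & C3 & C4 & C5).
    split; [exact C1|split; [exact C2|split; [exact C3|split; [exact C4|]]]].
    intros G f ii U D a K1 K2 _. apply (C5 G f ii U D a K1 K2).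
    destruct (main_ind eqV phi Sigma fr Hfresh HU _ (HT G f ii U K1)) as [_ [_ Hs]].
    apply Hs, K2.
Qed.
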